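(* Let $k\in\mathbb N$. Every $k$-ary dependency notion $\mathbf D$ is $\gamma$-bounded for $\gamma(n)=n^k$; that is, for every finite structure $\mathfrak M$ with domain $M$, every team $X$ and every $k$-tuple $\vec v$ of variables in the domain of $X$, if $\mathfrak M\models_X\mathbf D\vec v$ then there is $Y\subseteq X$ with $|Y|\le|M|^k$ and $\mathfrak M\models_Y\mathbf D\vec v$.
   Context: For a structure $\mathfrak M$ with domain $M$, a team $X$ is a set of assignments $s:V\to M$, $V$ a finite set of variables; for a tuple $\vec v$ in $V$, $X(\vec v)=\{s(\vec v):s\in X\}$. A $k$-ary dependency notion $\mathbf D$ is an isomorphism-closed class of structures $(M,R)$ with $R$ a $k$-ary relation on $M$, and $\mathfrak M\models_X\mathbf D\vec v$ iff $(M,X(\vec v))\in\mathbf D$. *)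

(* Defs.v *)
From mathcomp Require Import all_boot.
Set Implicit Arguments. Unset Strict Implicit. Unset Printing Implicit Defensive.

(* Only finite domains are relevant here, so the
   class is given by its finite members: dn_mem M R  <->  (M, R) \in D. *)
Record depNotion (k : nat) := DepNotion {
  dn_mem : forall M : finType, {set k.-tuple M} -> Prop;
  dn_iso : forall (M M' : finType) (f : M -> M'), bijective f ->
    forall R : {set k.-tuple M},
      dn_mem R -> dn_mem [set map_tuple f t | t in R]
}.

Definition team (V M : finType) := {set {ffun V -> M}}.

Definition team_rel (V M : finType) (k : nat) (X : team V M) (v : k.-tuple V)
  : {set k.-tuple M} := [set map_tuple (fun x => s x) v | s : {ffun V -> M} in X].

Definition sat_dep (k : nat) (D : depNotion k) (V M : finType)
  (X : team V M) (v : k.-tuple V) : Prop := dn_mem D (team_rel X v).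

(* Main.v *)
Require Import Defs.
From mathcomp Require Import all_boot.

Theorem mainTheorem12 (k : nat) (D : depNotion k) (M V : finType)
  (X : team V M) (v : k.-tuple V) :
  sat_dep D X v ->
  exists Y : team V M, Y \subset X /\ #|Y| <= #|M| ^ k /\ sat_dep D Y v.
Proof.
move=> HD.
set h := fun s : {ffun V -> M} => map_tuple (fun x => s x) v.
set R := team_rel X v.
set g := fun t : k.-tuple M => [pick s in X | h s == t].
pose Y : team V M := [set s | [exists t in R, g t == Some s]].
have gP : forall t s, g t = Some s -> s \in X /\ h s = t.
  move=> t s; rewrite /g; case: pickP => [s' /andP[Hs /eqP Ht] [<-]|] //.
have YX : Y \subset X.
  apply/subsetP=> s; rewrite inE => /existsP[t /andP[_ /eqP /gP[]]] //.
have RY : team_rel Y v = R.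
  apply/setP=> t; apply/imsetP/idP.
    move=> [s Hs ->]; apply/imsetP; exists s => //; exact: (subsetP YX).
  move=> Ht; case Hg: (g t) => [s|].
    have [Hs Hst] := gP _ _ Hg.
    exists s; last by rewrite -Hst.
    rewrite inE; apply/existsP; exists t; apply/andP; split=> //; exact/eqP.
  exfalso; move: Ht => /imsetP[s0 Hs0 Hst0].
  move: Hg; rewrite /g; case: pickP => // Hn _.
  by move: (Hn s0); rewrite Hs0 /h Hst0 eqxx.
exists Y; split=> //; split; last by rewrite /sat_dep RY.
have inj : {in Y &, injective h}.
  move=> s1 s2; rewrite !inE => /existsP[t1 /andP[_ /eqP H1]]
    /existsP[t2 /andP[_ /eqP H2]] Hh.
  have [_ E1] := gP _ _ H1; have [_ E2] := gP _ _ H2.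
  have : t1 = t2 by rewrite -E1 -E2.
  by move=> e; move: H1; rewrite e H2 => -[].
rewrite -(card_in_imset inj) -card_tuple.
exact: max_card.
Qed.
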